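(* Consider the two-layer multi-item order fulfillment problem described in the context, with $K\ge 1$ FDCs, fixed costs $f_0,f_1,\dots,f_K\ge 0$, and let $f=\min_{k\in[K]}f_k$. Suppose there are constants $b>a>0$ such that all variable costs satisfy $a\le c_{k,t}^i\le b$. For a threshold $\theta\ge 0$, let \textsc{Order-Size F-Priority} be the Gated Priority-based Greedy policy that uses, for every item $i$, the priority ranking $\prec_{\mathrm F}$ on $\{0,1,\dots,K\}$ defined by $k\prec_{\mathrm F}j \iff f_k<f_j$ or ($f_k=f_j$ and $k<j$), and the gating condition $G=\mathbb{I}\big(\sum_{i=1}^n S_t^i>\theta\big)$. Then \[\mathfrak{R}(\textsc{Order-Size F-Priority})\le \max\left\{\theta,\ \frac{f_0+b\theta}{f+a\theta},\ \frac{b}{a}\right\}.\] In particular, if $\theta=\sqrt{\frac{f_0}{a}+\frac{(f-b)^2}{4a^2}}-\frac{f-b}{2a}$, then \[\mathfrak{R}(\textsc{Order-Size F-Priority})\le \max\left\{\sqrt{\frac{f_0}{a}+\frac{(f-b)^2}{4a^2}}-\frac{f-b}{2a},\ \frac{b}{a}\right\}.\]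
   Context: Problem. There are $n$ items indexed by $i\in[n]=\{1,\dots,n\}$, $K$ front distribution centers (FDCs) indexed by $k\in[K]$, and one regional distribution center (RDC) indexed by $k=0$ that has unlimited inventory of every item. FDC $k$ initially holds $I_{k,0}^i\ge 0$ units of item $i$; FDC inventory is never replenished. In each period $t=1,\dots,T$ an order $\boldsymbol S_t=(S_t^i)_{i\in[n]}$ of nonnegative integers arrives. After observing $\boldsymbol S_t$ and the per-unit variable costs $c_{k,t}^i$ ($k=0,\dots,K$, $i\in[n]$), a policy must immediately and irrevocably choose quantities $m_{k,t}^i\ge 0$ with $\sum_{k=0}^K m_{k,t}^i=S_t^i$ for all $i$ and $m_{k,t}^i\le I_{k,t-1}^i$ for all $k\in[K]$, where $I_{k,t}^i=I_{k,0}^i-\sum_{\tau=1}^t m_{k,\tau}^i$. The cost of period $t$ is $\sum_{k=0}^K\big[f_k\,\mathbb{I}(\sum_{i=1}^n m_{k,t}^i>0)+\sum_{i=1}^n c_{k,t}^i m_{k,t}^i\big]$ (fixed costs $f_k$ are given); the total cost is the sum over all periods. An online policy (possibly randomized) chooses the period-$t$ quantities using only the fixed costs, initial inventories, and the orders and variable costs of periods $1,\dots,t$. An instance $I$ consists of $n,T$, the initial inventories, variable costs and orders; $\mathrm{ALG}(I)$ is the (expected) total cost of the policy and $\mathrm{OPT}(I)$ is the minimum total cost of a feasible plan chosen with full knowledge of the instance. The competitive ratio is $\mathfrak R(\mathrm{ALG})=\sup \mathrm{ALG}(I)/\mathrm{OPT}(I)$, the supremum over all $n,T$, all initial inventories,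 all variable costs $c_{k,t}^i\in[a,b]$ and all order sequences. Gated Priority-based Greedy policy: given for each item $i$ a total order $\prec_i$ on $\{0,1,\dots,K\}$ and a Boolean gating condition $G$ (a function of the fixed costs, current variable costs, current order and greedy plan), in each period $t$ it computes the greedy plan $\hat m_{k,t}^i=\min\big\{\big(S_t^i-\sum_{k'\in[K]:k'\prec_i k}I_{k',t-1}^i\big)^+,\ I_{k,t-1}^i\big\}\cdot\mathbb{I}(k\prec_i 0)$ for $k\in[K]$ and $\hat m_{0,t}^i=S_t^i-\sum_{k\in[K]}\hat m_{k,t}^i$; if $G=1$ it sets $m_{0,t}^i=S_t^i$ and $m_{k,t}^i=0$ for $k\in[K]$ (whole order to the RDC), otherwise $m_{k,t}^i=\hat m_{k,t}^i$ for all $k,i$; then it updates inventories. *)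

(* Defs.v *)
From HB Require Import structures.
From mathcomp Require Import all_boot all_order all_algebra.
Set Implicit Arguments. Unset Strict Implicit. Unset Printing Implicit Defensive.
Import Order.TTheory GRing.Theory Num.Theory.
Local Open Scope ring_scope.

Section Fulfillment.
Variables (R : realFieldType) (K n : nat).

(* Locations are 'I_K.+1 : index 0 is the RDC, indices 1..K are the FDCs.
   Items are 'I_n.  Periods t = 1..T are represented by 0-based t < T. *)
Definition rdc : 'I_K.+1 := ord0.

Definition qty := 'I_K.+1 -> 'I_n -> nat.

(* Greedy plan for per-item priority orders prec i (k \prec_i j = prec i k j),
   current inventories I (= I_{.,t-1}) and current order S (= S_t).
   Nat subtraction is truncated, i.e. it is (.)^+ . *)
Definition greedy_hat (prec : 'I_n -> rel 'I_K.+1) (I : qty) (S : 'I_n -> nat)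
  (k : 'I_K.+1) (i : 'I_n) : nat :=
  if prec i k rdc then
    minn (S i - \sum_(k' < K.+1 | (k' != rdc) && prec i k' k) I k' i)%N (I k i)
  else 0%N.

Definition greedy_plan (prec : 'I_n -> rel 'I_K.+1) (I : qty) (S : 'I_n -> nat) : qty :=
  fun k i => if k == rdc
             then (S i - \sum_(k' < K.+1 | k' != rdc) greedy_hat prec I S k' i)%N
             else greedy_hat prec I S k i.

(* The gate G may depend
   on the current variable costs, the current order and the greedy plan
   (fixed costs are parameters and may be closed over by G). *)
Definition gpg_decision (prec : 'I_n -> rel 'I_K.+1)
  (G : ('I_K.+1 -> 'I_n -> R) -> ('I_n -> nat) -> qty -> bool)
  (ct : 'I_K.+1 -> 'I_n -> R) (S : 'I_n -> nat) (I : qty) : qty :=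
  let mh := greedy_plan prec I S in
  if G ct S mh then (fun k i => if k == rdc then S i else 0%N) else mh.

(* Inventories after t periods under the policy (gpg_inv ... t = I_{.,t}). *)
Fixpoint gpg_inv (prec : 'I_n -> rel 'I_K.+1)
  (G : ('I_K.+1 -> 'I_n -> R) -> ('I_n -> nat) -> qty -> bool)
  (I0 : qty) (S : nat -> 'I_n -> nat) (c : nat -> 'I_K.+1 -> 'I_n -> R)
  (t : nat) : qty :=
  match t with
  | 0 => I0
  | t'.+1 =>
      let I := gpg_inv prec G I0 S c t' in
      let m := gpg_decision prec G (c t') (S t') I in
      fun k i => (I k i - m k i)%N
  end.

Definition gpg_plan (prec : 'I_n -> rel 'I_K.+1)
  (G : ('I_K.+1 -> 'I_n -> R) -> ('I_n -> nat) -> qty -> bool)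
  (I0 : qty) (S : nat -> 'I_n -> nat) (c : nat -> 'I_K.+1 -> 'I_n -> R)
  (t : nat) : qty :=
  gpg_decision prec G (c t) (S t) (gpg_inv prec G I0 S c t).

Definition period_cost (f : 'I_K.+1 -> R) (ct : 'I_K.+1 -> 'I_n -> R) (m : qty) : R :=
  \sum_(k < K.+1)
    (f k * (if (0 < \sum_(i < n) m k i)%N then 1 else 0)
     + \sum_(i < n) ct k i * (m k i)%:R).

Definition total_cost (f : 'I_K.+1 -> R) (c : nat -> 'I_K.+1 -> 'I_n -> R)
  (T : nat) (m : nat -> qty) : R :=
  \sum_(t < T) period_cost f (c t) (m t).

Definition feasible (I0 : qty) (S : nat -> 'I_n -> nat) (T : nat)
  (m : nat -> qty) : Prop :=
  (forall t, (t < T)%N -> forall i, (\sum_(k < K.+1) m t k i)%N = S t i) /\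
  (forall t, (t < T)%N -> forall k, k != rdc -> forall i,
      (m t k i <= I0 k i - \sum_(s < t) m s k i)%N).

Definition prec_F (f : 'I_K.+1 -> R) : rel 'I_K.+1 :=
  fun k j => (f k < f j) || ((f k == f j) && (k < j)%N).

Definition order_size_gate (theta : R) :
  ('I_K.+1 -> 'I_n -> R) -> ('I_n -> nat) -> qty -> bool :=
  fun _ S _ => theta < (\sum_(i < n) S i)%N%:R.

Definition os_fp_cost (f : 'I_K.+1 -> R) (theta : R) (I0 : qty)
  (S : nat -> 'I_n -> nat) (c : nat -> 'I_K.+1 -> 'I_n -> R) (T : nat) : R :=
  total_cost f c T (gpg_plan (fun _ => prec_F f) (order_size_gate theta) I0 S c).

(* f = min_{k in [K]} f_k (the default ord_max is itself an FDC when K >= 1). *)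
Definition fmin (f : 'I_K.+1 -> R) : R :=
  \big[Num.min/f ord_max]_(k < K.+1 | k != rdc) f k.

End Fulfillment.

(* Main.v *)
Require Import Defs.
From HB Require Import structures.
From mathcomp Require Import all_boot all_order all_algebra.
From mathcomp Require Import zify ring lra.
Set Implicit Arguments. Unset Strict Implicit. Unset Printing Implicit Defensive.
Import Order.TTheory GRing.Theory Num.Theory.
Local Open Scope ring_scope.

Section Core.
Variables (T : finType) (lt : rel T).
Hypothesis lt_irr : forall x, ~~ lt x x.
Hypothesis lt_tr : forall x y z, lt x y -> lt y z -> lt x z.
Hypothesis lt_tot : forall x y, x != y -> lt x y || lt y x.

Let rk x := #|[set y | lt y x]|.

Lemma rk_lt x y : lt x y -> (rk x < rk y)%N.
Proof.
move=> hxy; apply: proper_card; apply/properP; split.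
  apply/subsetP=> z; rewrite !inE => hz; exact: lt_tr hz hxy.
by exists x; rewrite !inE ?hxy ?lt_irr.
Qed.

Lemma has_max (D : {set T}) x0 : x0 \in D ->
  exists2 m, m \in D & forall k, k \in D -> k != m -> lt k m.
Proof.
move=> hx0; case: (arg_maxnP (P := [pred k | k \in D]) rk hx0) => m hm hmax.
exists m => // k hk hkm.
case/orP: (lt_tot hkm) => // hmk.
have := rk_lt hmk; have := hmax k hk; rewrite /= => h1 h2.
by move: (leq_trans h2 h1); rewrite ltnn.
Qed.

Variables (U : {set T}) (W : T -> nat) (S : nat).
Definition hcore k := minn (S - \sum_(k' in U | lt k' k) W k') (W k).

Lemma core_down N (D : {set T}) : #|D| = N -> D \subset U ->
  (forall k k', k \in D -> k' \in U -> lt k' k -> k' \in D) ->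
  \sum_(k in D) hcore k = minn S (\sum_(k in D) W k).
Proof.
elim: N D => [|N IH] D hN hDU hdown.
  move/eqP: hN; rewrite cards_eq0 => /eqP ->.
  by rewrite !big_set0 minn0.
have : (0 < #|D|)%N by rewrite hN.
case/card_gt0P => x0 hx0.
case: (has_max hx0) => mx hm hmax.
rewrite (big_setD1 mx hm) /= (big_setD1 mx hm) /=.
have hD' : #|D :\ mx| = N by move: hN; rewrite (cardsD1 mx) hm; case.
rewrite IH //; last first.
- move=> k k'; rewrite !inE => /andP[hkm hk] hk'U hlt.
  rewrite (hdown k k') // andbT; apply/eqP => ekm.
  have := hmax k hk hkm; rewrite -ekm => h.
  by move: (lt_tr h hlt); rewrite (negbTE (lt_irr _)).
- by apply: subset_trans hDU; apply: subsetDl.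
rewrite /hcore.
have -> : \sum_(k' in U | lt k' mx) W k' = \sum_(k in D :\ mx) W k.
  apply: eq_bigl => k; rewrite !inE.
  apply/andP/andP => [[hkU hlt]|[hkm hk]].
    split; last exact: hdown hm hkU hlt.
    by apply/eqP => e; move: hlt; rewrite e (negbTE (lt_irr _)).
  by split; [exact: (subsetP hDU) | exact: hmax].
set Q := \sum_(k in D :\ mx) W k.
lia.
Qed.

Lemma core : \sum_(k in U) hcore k = minn S (\sum_(k in U) W k).
Proof. by apply: (@core_down #|U|). Qed.
End Core.
Section Greedy.
Variables (R : realFieldType) (K n : nat) (f : 'I_K.+1 -> R).
Local Notation pr := (prec_F f).
Local Notation rdc := (rdc K).

Lemma pr_irr k : ~~ pr k k.
Proof. by rewrite /prec_F ltxx ltnn andbF. Qed.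

Lemma pr_trans x y z : pr x y -> pr y z -> pr x z.
Proof.
rewrite /prec_F => /orP[h1|/andP[/eqP e1 h1]] /orP[h2|/andP[/eqP e2 h2]]; apply/orP.
- by left; exact: lt_trans h1 h2.
- by left; rewrite -e2.
- by left; rewrite e1.
- by right; rewrite e1 e2 eqxx /=; exact: ltn_trans h1 h2.
Qed.

Lemma pr_total x y : x != y -> pr x y || pr y x.
Proof.
move=> hxy; rewrite /prec_F; case: (ltgtP (f x) (f y)) => //= e.
idtac.
by rewrite -neq_ltn.
Qed.

Lemma pr_lt x y : f x < f y -> pr x y.
Proof. by rewrite /prec_F => ->. Qed.

Lemma pr_le x y : pr x y -> f x <= f y.
Proof. by case/orP => [/ltW|/andP[/eqP -> _]]. Qed.

Definition Uset := [set k | (k != rdc) && pr k rdc].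

Variables (I : qty K n) (S : 'I_n -> nat) (i : 'I_n).
Local Notation hat k := (greedy_hat (fun _ => pr) I S k i).
Local Notation plan k := (greedy_plan (fun _ => pr) I S k i).

Lemma hat_le k : (hat k <= I k i)%N.
Proof. by rewrite /greedy_hat; case: ifP => // _; apply: geq_minr. Qed.

Lemma hat_pos k : (0 < hat k)%N -> pr k rdc.
Proof. by rewrite /greedy_hat; case: ifP. Qed.

Lemma hat_core k : k \in Uset ->
  hat k = hcore pr Uset (fun k => I k i) (S i) k.
Proof.
rewrite inE => /andP[hk hkr]; rewrite /greedy_hat hkr /hcore; congr minn; congr (_ - _)%N.
apply: eq_bigl => k'; rewrite inE.
case h: (pr k' k); rewrite ?andbF ?andbT //.
by rewrite (pr_trans h hkr) ?andbT.
Qed.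

Lemma H_eq : (\sum_(k < K.+1 | k != rdc) hat k = minn (S i) (\sum_(k in Uset) I k i))%N.
Proof.
rewrite (bigID (fun k => pr k rdc)) /= [X in (_ + X)%N]big1; last first.
  by move=> k /andP[_ /negbTE h]; rewrite /greedy_hat h.
rewrite addn0 -(core pr_irr pr_trans pr_total).
rewrite [RHS]big_mkcond [LHS]big_mkcond /=; apply: eq_bigr => k _.
have := @hat_core k; rewrite inE; case: ifP => // h hc; by rewrite hc.
Qed.

Lemma H_le : (\sum_(k < K.+1 | k != rdc) hat k <= S i)%N.
Proof. by rewrite H_eq geq_minl. Qed.

Lemma plan_sum : (\sum_(k < K.+1) plan k = S i)%N.
Proof.
rewrite (bigD1 rdc) //= /greedy_plan eqxx.
have := H_le.
under eq_bigr => k hk do rewrite (negbTE hk).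
by move=> h; rewrite subnK.
Qed.

Lemma plan_full j k : (0 < plan j)%N -> f k < f j -> k != rdc -> hat k = I k i.
Proof.
move=> hj hkj hk.
have hkj' := pr_lt hkj.
case: (eqVneq j rdc) => [ej|nj].
  move: hj; rewrite /greedy_plan ej eqxx H_eq => hj.
  have hU : k \in Uset by rewrite inE hk -ej hkj'.
  have eH : (minn (S i) (\sum_(k in Uset) I k i) = \sum_(k in Uset) I k i)%N.
    move: hj; set Q := (\sum_(k in Uset) I k i); lia.
  have := H_eq; rewrite eH.
  rewrite (bigID (fun k => pr k rdc)) /= [X in (_ + X)%N]big1; last first.
    by move=> k' /andP[_ /negbTE h]; rewrite /greedy_hat h.
  rewrite addn0.
  rewrite (eq_bigl (fun k => k \in Uset)); last by move=> k'; rewrite inE.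
  rewrite (big_setD1 k hU) (big_setD1 k hU) /= => e.
  have : (\sum_(k0 in Uset :\ k) hat k0 <= \sum_(k0 in Uset :\ k) I k0 i)%N.
    by apply: leq_sum => k' _; apply: hat_le.
  have := hat_le k.
  move=> h1 h2; apply/eqP; rewrite eqn_leq h1 /= -(leq_add2r (\sum_(i0 in Uset :\ k) hat i0)%N) e leq_add2l. exact: h2.
move: hj; rewrite /greedy_plan (negbTE nj) => hj.
have hjr := hat_pos hj.
move: hj; rewrite /greedy_hat hjr (pr_trans hkj' hjr).
set Pj := (\sum_(k' < K.+1 | (k' != rdc) && pr k' j) I k' i)%N.
set Pk := (\sum_(k' < K.+1 | (k' != rdc) && pr k' k) I k' i)%N.
have : (Pk + I k i <= Pj)%N.
  rewrite /Pj (bigD1 k) /=; last by rewrite hk hkj'.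
  rewrite addnC leq_add2l /Pk [X in (X <= _)%N]big_mkcond [X in (_ <= X)%N]big_mkcond /=.
  apply: leq_sum => k' _; case: ifP => // /andP[hk' h].
  rewrite hk' (pr_trans h hkj') /= ifT //.
  by apply/eqP=> e; move: h; rewrite e (negbTE (pr_irr _)).
lia.
Qed.
End Greedy.
Lemma abel (R : realFieldType) (J : finType) (g : J -> R) (X Y : J -> nat) :
  (forall k, 0 <= g k) -> (\sum_k X k <= \sum_k Y k)%N ->
  (forall j k, (0 < X j)%N -> g k < g j -> (Y k <= X k)%N) ->
  \sum_k g k * (X k)%:R <= \sum_k g k * (Y k)%:R.
Proof.
move=> g0 hs hP.
case: (boolP [exists j, 0 < X j]%N) => [/existsP[j0 hj0]|].
  case: (arg_maxP g (P := [pred j | 0 < X j]%N) hj0) => js hjs hmax.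
  set mu := g js.
  have key k : g k * (X k)%:R - g k * (Y k)%:R <= mu * ((X k)%:R - (Y k)%:R).
    case: (ltgtP (g k) mu) => h.
    - have : ((Y k)%:R <= (X k)%:R :> R) by rewrite ler_nat; exact: hP h.
      nra.
    - have hX : X k = 0%N.
        apply/eqP; rewrite -leqn0 leqNgt; apply/negP => hk.
        by have := hmax k hk; rewrite /= leNgt h.
      rewrite hX /=.
      have : (0 <= (Y k)%:R :> R) by [].
      nra.
    - by rewrite h; lra.
  have : \sum_k (g k * (X k)%:R - g k * (Y k)%:R) <= \sum_k mu * ((X k)%:R - (Y k)%:R).
    by apply: ler_sum => k _; exact: key.
  rewrite sumrB -mulr_sumr sumrB -!natr_sum.
  have hmu : 0 <= mu by exact: g0.
  have : ((\sum_k X k)%N%:R <= (\sum_k Y k)%N%:R :> R) by rewrite ler_nat.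
  nra.
rewrite negb_exists => /forallP hall.
rewrite big1; last by move=> k _; move: (hall k); rewrite -leqNgt leqn0 => /eqP ->; rewrite mulr0.
by apply: sumr_ge0 => k _; apply: mulr_ge0.
Qed.
Section Main.
Variables (R : realFieldType) (K n T : nat) (f : 'I_K.+1 -> R) (a b theta : R).
Variables (I0 : qty K n) (S : nat -> 'I_n -> nat) (c : nat -> 'I_K.+1 -> 'I_n -> R)
  (m : nat -> qty K n).
Hypothesis feas : feasible I0 S T m.

Local Notation pr := (prec_F f).
Local Notation rdc := (rdc K).
Local Notation alg := (gpg_plan (fun _ => prec_F f) (order_size_gate theta) I0 S c).
Local Notation inv := (gpg_inv (fun _ => prec_F f) (order_size_gate theta) I0 S c).
Definition small t := ~~ (theta < ((\sum_(i < n) S t i)%N)%:R).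

Lemma alg_small t : small t -> alg t = greedy_plan (fun _ => pr) (inv t) (S t).
Proof. by rewrite /small /gpg_plan /gpg_decision /order_size_gate => /negbTE ->. Qed.

Lemma alg_large t : ~~ small t -> alg t = (fun k i => if k == rdc then S t i else 0%N).
Proof. by rewrite /small /gpg_plan /gpg_decision /order_size_gate => /negbNE ->. Qed.

Lemma inv_S t k i : inv t.+1 k i = (inv t k i - alg t k i)%N.
Proof. by []. Qed.

Lemma alg_le_inv t k i : k != rdc -> (alg t k i <= inv t k i)%N.
Proof.
move=> hk; case: (boolP (small t)) => h.
  by rewrite alg_small // /greedy_plan (negbTE hk) hat_le.
by rewrite alg_large // (negbTE hk).
Qed.

Lemma inv_sum t k i : k != rdc -> (\sum_(s < t) alg s k i + inv t k i)%N = I0 k i.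
Proof.
move=> hk; elim: t => [|t IH]; first by rewrite big_ord0.
rewrite big_ord_recr inv_S /=.
have := alg_le_inv t i hk.
by move=> h; rewrite -addnA subnKC.
Qed.

Lemma inv_mono t d k i : (inv (t + d) k i <= inv t k i)%N.
Proof.
elim: d => [|d IH]; first by rewrite addn0.
by rewrite addnS inv_S; apply: leq_trans (leq_subr _ _) IH.
Qed.

Lemma alg_sum t i : (\sum_(k < K.+1) alg t k i)%N = S t i.
Proof.
case: (boolP (small t)) => h.
  by rewrite alg_small // plan_sum.
rewrite alg_large // (bigD1 rdc) //= ?eqxx big1 ?addn0 //.
by move=> k /negbTE ->.
Qed.

Lemma m_sum t i : (t < T)%N -> (\sum_(k < K.+1) m t k i)%N = S t i.
Proof. by move=> ht; apply: feas.1. Qed.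

Lemma m_le t k i : (t <= T)%N -> k != rdc -> (\sum_(s < t) m s k i <= I0 k i)%N.
Proof.
move=> + hk; elim: t => [|t IH] ht; first by rewrite big_ord0.
rewrite big_ord_recr /=.
have h1 := IH (ltnW ht).
have h2 := feas.2 t ht k hk i.
by apply: leq_trans (leq_add (leqnn _) h2) _; rewrite subnKC.
Qed.

Definition X k i := (\sum_(t < T | small t) alg t k i)%N.
Definition Y k i := (\sum_(t < T | small t) m t k i)%N.

Lemma X_sum i : (\sum_(k < K.+1) X k i)%N = (\sum_(t < T | small t) S t i)%N.
Proof.
rewrite /X exchange_big /=; apply: eq_bigr => t _; exact: alg_sum.
Qed.

Lemma Y_sum i : (\sum_(k < K.+1) Y k i)%N = (\sum_(t < T | small t) S t i)%N.
Proof.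
rewrite /Y exchange_big /=; apply: eq_bigr => t _; exact: m_sum.
Qed.

Lemma Y_le k i : k != rdc -> (Y k i <= I0 k i)%N.
Proof.
move=> hk; apply: leq_trans (m_le i (leqnn T) hk).
rewrite /Y [Z in (_ <= Z)%N](bigID (fun t : 'I_T => small t)) /=; exact: leq_addr.
Qed.

Lemma X_eq k i : k != rdc -> (X k i + inv T k i)%N = I0 k i.
Proof.
move=> hk; rewrite -(inv_sum T i hk); congr (_ + _)%N.
rewrite /X [RHS](bigID (fun t : 'I_T => small t)) /= [Z in (_ = (_ + Z)%N)]big1 ?addn0 //.
by move=> t ht; rewrite alg_large // (negbTE hk).
Qed.

Lemma pairP i j k : (0 < X j i)%N -> f k < f j -> (Y k i <= X k i)%N.
Proof.
move=> hX hkj.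
have [t /andP[ht hpos]] : exists t : 'I_T, small t && (0 < alg t j i)%N.
  apply/existsP; apply: contraTT hX; rewrite negb_exists => /forallP hall.
  rewrite -leqNgt leqn0 /X; apply/eqP; apply: big1 => t ht.
  by move: (hall t); rewrite ht /= -leqNgt leqn0 => /eqP.
move: hpos; rewrite alg_small // => hpos.
have hk : k != rdc.
  apply/eqP => ek; move: hkj; rewrite ek.
  case: (eqVneq j rdc) => [->|nj]; first by rewrite ltxx.
  move: hpos; rewrite /greedy_plan (negbTE nj) => /hat_pos /pr_le h1 h2.
  by move: (le_lt_trans h1 h2); rewrite ltxx.
have e := plan_full hpos hkj hk.
have e0 : inv t.+1 k i = 0%N.
  by rewrite inv_S alg_small // /greedy_plan (negbTE hk) e subnn.
have : (inv T k i <= inv t.+1 k i)%N.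
  have ht' := ltn_ord t; move: (nat_of_ord t) ht' e0 => t' ht' _.
  by rewrite -(subnKC ht'); apply: inv_mono.
rewrite e0 leqn0 => /eqP eT.
have := X_eq i hk; rewrite eT addn0 => ->.
exact: Y_le.
Qed.

Hypothesis f_ge0 : forall k, 0 <= f k.
Hypothesis a_gt0 : 0 < a.
Hypothesis ab : a <= b.
Hypothesis th_ge0 : 0 <= theta.
Hypothesis fa_gt0 : 0 < fmin f + a * theta.
Hypothesis cb : forall t k i, (t < T)%N -> a <= c t k i <= b.

Local Notation rho :=
  (Num.max theta (Num.max ((f rdc + b * theta) / (fmin f + a * theta)) (b / a))).
Definition Uf (q : qty K n) : R := \sum_(k < K.+1) \sum_(i < n) f k * (q k i)%:R.
Local Notation st t := (((\sum_(i < n) S t i)%N)%:R : R).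

Lemma rho_th : theta <= rho.
Proof. by rewrite le_max lexx. Qed.
Lemma rho_ba : b <= rho * a.
Proof.
rewrite -ler_pdivrMr //; by rewrite !le_max lexx !orbT.
Qed.
Lemma rho_g : f rdc + b * theta <= rho * (fmin f + a * theta).
Proof.
rewrite -ler_pdivrMr //; by rewrite !le_max lexx !orbT.
Qed.
Lemma rho_ge0 : 0 <= rho.
Proof. exact: le_trans th_ge0 rho_th. Qed.

Lemma fmin_le k : k != rdc -> fmin f <= f k.
Proof. by move=> hk; rewrite /fmin; apply: bigmin_le_cond. Qed.

Lemma sumq (q : qty K n) t (w : R) : (forall i, (\sum_k q k i)%N = S t i) ->
  \sum_(k < K.+1) \sum_(i < n) w * (q k i)%:R = w * st t.
Proof.
move=> hq; rewrite exchange_big /= natr_sum mulr_sumr; apply: eq_bigr => i _.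
by rewrite -mulr_sumr -natr_sum hq.
Qed.

Lemma pc_upper t (q : qty K n) : (t < T)%N -> (forall i, (\sum_k q k i)%N = S t i) ->
  period_cost f (c t) q <= Uf q + b * st t.
Proof.
move=> ht hq; rewrite /period_cost -(sumq b hq) /Uf -big_split /=; apply: ler_sum => k _.
apply: lerD.
  rewrite -mulr_sumr -natr_sum; case: ifP => h.
    by apply: (ler_wpM2l (f_ge0 k)); rewrite ler1n.
  by rewrite mulr0; apply: mulr_ge0 => //; exact: ler0n.
apply: ler_sum => i _; apply: ler_wpM2r; first exact: ler0n.
by case/andP: (cb k i ht).
Qed.

Lemma pc_lower_small t : (t < T)%N -> small t ->
  Uf (m t) + b * st t <= rho * period_cost f (c t) (m t).
Proof.
move=> ht hs.
have hq := fun i => m_sum i ht.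
rewrite /period_cost -(sumq b hq) /Uf -big_split mulr_sumr /=; apply: ler_sum => k _.
rewrite mulrDr; apply: lerD.
  rewrite -mulr_sumr -natr_sum.
  set M := (\sum_(i < n) m t k i)%N.
  have hM : (M <= \sum_(i < n) S t i)%N.
    rewrite /M; apply: leq_sum => i _; rewrite -(hq i).
    by rewrite (bigD1 k) //= leq_addr.
  have hst : st t <= theta by move: hs; rewrite /small -leNgt.
  have hM' : (M%:R : R) <= st t by rewrite ler_nat.
  have := rho_th; have := f_ge0 k.
  case: ifP => h.
    rewrite mulr1 => h1 h2; nra.
  have -> : M = 0%N by move/negbT: h; rewrite -leqNgt leqn0 => /eqP.
  by rewrite !mulr0.
rewrite mulr_sumr; apply: ler_sum => i _.
have := rho_ba; have := rho_ge0; case/andP: (cb k i ht) => h1 h2.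
have hm0 : (0 : R) <= (m t k i)%:R by exact: ler0n.
move=> hr0 hba.
have h3 : rho * a <= rho * c t k i by apply: (ler_wpM2l hr0).
have h4 := le_trans hba h3.
nra.
Qed.

Lemma pc_large t : (t < T)%N -> ~~ small t ->
  period_cost f (c t) (alg t) <= rho * period_cost f (c t) (m t).
Proof.
move=> ht hs.
have hq := fun i => m_sum i ht.
have hA : period_cost f (c t) (alg t) <= f rdc + b * st t.
  rewrite alg_large // /period_cost (bigD1 rdc) //= [Z in _ + Z <= _]big1 ?addr0; last first.
    move=> k hk; rewrite (negbTE hk) big1_eq /= mulr0 add0r.
    by rewrite big1 // => i _; rewrite mulr0.
  rewrite ?eqxx; apply: lerD.
    by case: ifP; rewrite ?mulr1 ?mulr0.
  rewrite natr_sum mulr_sumr; apply: ler_sum => i _; apply: ler_wpM2r; first exact: ler0n.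
  by case/andP: (cb rdc i ht).
have hsp : theta < st t by move: hs; rewrite /small negbK.
have [ks hks] : exists ks, (0 < \sum_(i < n) m t ks i)%N.
  apply/existsP; apply: contraTT hsp; rewrite negb_exists => /forallP hall.
  have : (\sum_(k < K.+1) \sum_(i < n) m t k i = 0)%N.
    apply: big1 => k _; by move: (hall k); rewrite -leqNgt leqn0 => /eqP.
  rewrite exchange_big /=.
  under eq_bigr => i _ do rewrite hq.
  by move=> ->; rewrite -leNgt.
have hB : f ks + a * st t <= period_cost f (c t) (m t).
  rewrite /period_cost big_split /=; apply: lerD.
    rewrite (bigD1 ks) //= hks mulr1 lerDl.
    by apply: sumr_ge0 => k _; apply: mulr_ge0 => //; case: ifP.
  rewrite -(sumq a hq); apply: ler_sum => k _; apply: ler_sum => i _.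
  apply: ler_wpM2r; first exact: ler0n.
  by case/andP: (cb k i ht).
apply: (le_trans hA); apply: le_trans (ler_wpM2l rho_ge0 hB).
have hba := rho_ba; have hr0 := rho_ge0; have hs0 : 0 <= st t by exact: ler0n.
case: (eqVneq ks rdc) => [->|nk].
  have hf := f_ge0 rdc.
  have hr1 : 1 <= rho.
    have : a <= rho * a by exact: le_trans ab hba.
    by move=> h; rewrite -(ler_pM2r a_gt0) mul1r.
  nra.
have hfk := fmin_le nk.
have hg := rho_g.
have h1 : 0 <= rho * (f ks - fmin f) by apply: mulr_ge0 => //; rewrite subr_ge0.
have h2 : 0 <= (rho * a - b) * (st t - theta).
  by apply: mulr_ge0; rewrite subr_ge0 // ltW.
nra.
Qed.

Lemma Uf_sum (q : nat -> qty K n) : \sum_(t < T | small t) Uf (q t) =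
  \sum_(i < n) \sum_(k < K.+1) f k * ((\sum_(t < T | small t) q t k i)%N)%:R.
Proof.
rewrite /Uf [RHS]exchange_big /= exchange_big /=; apply: eq_bigr => k _.
rewrite exchange_big /=; apply: eq_bigr => i _.
by rewrite natr_sum mulr_sumr.
Qed.

Lemma Ucomp : \sum_(t < T | small t) Uf (alg t) <= \sum_(t < T | small t) Uf (m t).
Proof.
rewrite !Uf_sum; apply: ler_sum => i _.
apply: (@abel R _ f (fun k => X k i) (fun k => Y k i)) => //.
  by rewrite X_sum Y_sum.
by move=> j k; apply: pairP.
Qed.

Lemma part1 : os_fp_cost f theta I0 S c T <= rho * total_cost f c T m.
Proof.
have per t : (t < T)%N -> period_cost f (c t) (alg t) <=
    rho * period_cost f (c t) (m t) + (if small t then Uf (alg t) - Uf (m t) else 0).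
  move=> ht; case: ifP => hs.
    have h1 := pc_upper ht (alg_sum t).
    have h2 := pc_lower_small ht hs.
    lra.
  by rewrite addr0; apply: pc_large => //; rewrite hs.
rewrite /os_fp_cost /total_cost.
have hs : \sum_(t < T) period_cost f (c t) (alg t) <=
    \sum_(t < T) (rho * period_cost f (c t) (m t) +
       (if small t then Uf (alg t) - Uf (m t) else 0)).
  by apply: ler_sum => t _; exact: per.
apply: (le_trans hs).
rewrite big_split /= -mulr_sumr -big_mkcond /= sumrB.
have := Ucomp; lra.
Qed.
End Main.

Theorem theorem1 (R : rcfType) (K : nat) (f : 'I_K.+1 -> R) (a b : R) :
  (1 <= K)%N -> (forall k, 0 <= f k) -> 0 < a -> a < b ->
  (forall theta : R, 0 <= theta -> 0 < fmin f + a * theta ->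
     forall (n T : nat) (I0 : qty K n) (S : nat -> 'I_n -> nat)
            (c : nat -> 'I_K.+1 -> 'I_n -> R),
     (forall t k i, (t < T)%N -> a <= c t k i <= b) ->
     forall m : nat -> qty K n, feasible I0 S T m ->
       os_fp_cost f theta I0 S c T
       <= Num.max theta
            (Num.max ((f (rdc K) + b * theta) / (fmin f + a * theta)) (b / a))
          * total_cost f c T m)
  /\
  (forall (n T : nat) (I0 : qty K n) (S : nat -> 'I_n -> nat)
          (c : nat -> 'I_K.+1 -> 'I_n -> R),
     (forall t k i, (t < T)%N -> a <= c t k i <= b) ->
     forall m : nat -> qty K n, feasible I0 S T m ->
       os_fp_cost f
         (Num.sqrt (f (rdc K) / a + (fmin f - b) ^+ 2 / (4 * a ^+ 2))
          - (fmin f - b) / (2 * a)) I0 S c T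
       <= Num.max
            (Num.sqrt (f (rdc K) / a + (fmin f - b) ^+ 2 / (4 * a ^+ 2))
             - (fmin f - b) / (2 * a))
            (b / a)
          * total_cost f c T m).
Proof.
move=> hK f0 ha hab.
have P1 : forall theta : R, 0 <= theta -> 0 < fmin f + a * theta ->
     forall (n T : nat) (I0 : qty K n) (S : nat -> 'I_n -> nat)
            (c : nat -> 'I_K.+1 -> 'I_n -> R),
     (forall t k i, (t < T)%N -> a <= c t k i <= b) ->
     forall m : nat -> qty K n, feasible I0 S T m ->
       os_fp_cost f theta I0 S c T
       <= Num.max theta
            (Num.max ((f (rdc K) + b * theta) / (fmin f + a * theta)) (b / a))
          * total_cost f c T m.
  move=> th hth hfa n T I0 S c hc m hm.
  by apply: part1 => //; exact: ltW.
split=> //.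
move=> n T I0 S c hc m hm.
set phi := fmin f.
have hphi : 0 <= phi.
  rewrite /phi /fmin; apply: le_bigmin => // k _.
set x := (phi - b) / (2 * a).
set D := f (rdc K) / a + (phi - b) ^+ 2 / (4 * a ^+ 2).
set r := Num.sqrt D.
have ha0 : a != 0 by rewrite gt_eqF.
have hx2 : (phi - b) ^+ 2 / (4 * a ^+ 2) = x ^+ 2.
  by rewrite /x; field; rewrite ha0.
have hD : 0 <= D.
  rewrite /D hx2; apply: addr_ge0; last exact: sqr_ge0.
  by apply: divr_ge0 => //; exact: ltW.
have hr2 : r ^+ 2 = D by rewrite /r sqr_sqrtr.
have hr0 : 0 <= r by rewrite /r sqrtr_ge0.
have hax : phi = b + 2 * a * x by rewrite /x; field; rewrite ha0.
have har : a * r ^+ 2 = f (rdc K) + a * x ^+ 2.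
  rewrite hr2 /D hx2 mulrDr; congr (_ + _); rewrite mulrC divfK //.
set th := r - x.
have hth : 0 <= th.
  rewrite /th subr_ge0; have hf := f0 (rdc K).
  have : x ^+ 2 <= r ^+ 2 by nra.
  nra.
have hfa : 0 < phi + a * th.
  rewrite /th hax.
  have hb : 0 < b by exact: lt_trans hab.
  have : 0 <= a * r by apply: mulr_ge0 => //; exact: ltW.
  have : 0 <= b + 2 * a * x by rewrite -hax.
  nra.
have he : th * (phi + a * th) = f (rdc K) + b * th.
  rewrite /th hax.
  have -> : (r - x) * (b + 2 * a * x + a * (r - x)) = b * (r - x) + a * r ^+ 2 - a * x ^+ 2 by ring.
  rewrite har; ring.
have hg : (f (rdc K) + b * th) / (phi + a * th) = th.
  by rewrite -he mulfK // gt_eqF.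
have := P1 th hth hfa n T I0 S c hc m hm.
by rewrite hg maxA maxxx.
Qed.
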